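(* Let $S$ be a connected graph. Then every connected $S$-free graph is super-edge-connected if and only if $S$ is an induced subgraph of $P_3$.
   Context: All graphs are finite and simple. $P_n$ denotes the path on $n$ vertices. For a graph $S$, a graph $G$ is $S$-free if $G$ has no induced subgraph isomorphic to $S$. An edge-cut of a connected graph $G$ is a set $F\subseteq E(G)$ such that $G-F$ is disconnected; the edge-connectivity $\kappa'(G)$ is the minimum size of an edge-cut. A connected graph $G$ is super-edge-connected if every minimum edge-cut of $G$ is the set of all edges incident with some single vertex, i.e. every minimum edge-cut isolates a vertex. *)

(* Defs.v *)
From mathcomp Require Import all_boot.
Set Implicit Arguments. Unset Strict Implicit. Unset Printing Implicit Defensive.

Record sgraph := SGraph {
  vert :> finType;
  adj : rel vert;
  adj_sym : symmetric adj;
  adj_irr : irreflexive adj }.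

Definition connected_rel (T : finType) (r : rel T) : Prop :=
  (exists x : T, True) /\ forall x y : T, connect r x y.

Definition connected (G : sgraph) : Prop := connected_rel (@adj G).

Definition edges (G : sgraph) : {set {set G}} :=
  [set [set x; y] | x in G, y in G & adj x y].

Definition remove_edges (G : sgraph) (F : {set {set G}}) : rel G :=
  fun x y => adj x y && ([set x; y] \notin F).

Definition is_edge_cut (G : sgraph) (F : {set {set G}}) : Prop :=
  F \subset edges G /\ ~ connected_rel (remove_edges F).

Definition is_min_edge_cut (G : sgraph) (F : {set {set G}}) : Prop :=
  is_edge_cut F /\ forall F' : {set {set G}}, is_edge_cut F' -> #|F| <= #|F'|.

Definition incident_edges (G : sgraph) (v : G) : {set {set G}} :=
  [set E0 in edges G | v \in E0].

Definition super_edge_connected (G : sgraph) : Prop :=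
  connected G /\
  forall F, is_min_edge_cut F -> exists v : G, F = incident_edges v.

Definition induced_sub (S G : sgraph) : Prop :=
  exists f : S -> G, injective f /\ forall x y : S, adj x y = adj (f x) (f y).

Definition free (S G : sgraph) : Prop := ~ induced_sub S G.

Definition P3_adj : rel 'I_3 := fun i j => (i.+1 == j :> nat) || (j.+1 == i :> nat).

Lemma P3_sym : symmetric P3_adj.
Proof. by move=> i j; rewrite /P3_adj orbC. Qed.

Lemma P3_irr : irreflexive P3_adj.
Proof. by move=> i; rewrite /P3_adj orbb; apply/negbTE; rewrite neq_ltn ltnSn orbT. Qed.

Definition P3 : sgraph := SGraph P3_sym P3_irr.

(* Main.v *)
Require Import Defs.
From mathcomp Require Import all_boot zify.
From Stdlib Require Import Classical.
Set Implicit Arguments. Unset Strict Implicit. Unset Printing Implicit Defensive.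

Section Gen.
Variable G : sgraph.
Implicit Types (F : {set {set G}}) (x y v r w u s t q : G) (E : {set G}).

Lemma adjC x y : adj x y = adj y x. Proof. exact: adj_sym. Qed.
Lemma adjxx x : adj x x = false. Proof. exact: adj_irr. Qed.

Lemma set2C x y : [set x; y] = [set y; x].
Proof. by rewrite setUC. Qed.

Lemma rem_sym F : symmetric (remove_edges F).
Proof. by move=> x y; rewrite /remove_edges adjC set2C. Qed.

Lemma edgesP x y : adj x y -> [set x; y] \in edges G.
Proof. by move=> h; apply/imset2P; exists x y; rewrite // inE. Qed.

Lemma edgesE E : E \in edges G -> exists x y, adj x y /\ E = [set x; y].
Proof. by case/imset2P=> x y _; rewrite inE => h ->; exists x, y. Qed.

Lemma incidentE v E : E \in incident_edges v -> exists r, adj v r /\ E = [set v; r].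
Proof.
rewrite inE => /andP[/edgesE[x [y [h ->]]]]; rewrite !inE => /orP[]/eqP->.
  by exists y.
by exists x; rewrite adjC set2C.
Qed.

Lemma incident_adj v r : adj v r -> [set v; r] \in incident_edges v.
Proof. by move=> h; rewrite inE edgesP //= !inE eqxx. Qed.

Lemma flip_edge (A : pred G) u y : connected G -> A u -> ~~ A y ->
  exists s t, [/\ adj s t, A s & ~~ A t].
Proof.
move=> [_ Gc] Au Ay.
case: (boolP [forall s, forall t, adj s t ==> (A s == A t)]) => [/forallP h| ].
  have cl : closed (@adj G) A by move=> s t hst; move: (h s) => /forallP/(_ t); rewrite hst => /eqP.
  by move: (closed_connect cl (Gc u y)); rewrite !unfold_in Au (negbTE Ay).
rewrite negb_forall => /existsP[s]; rewrite negb_forall => /existsP[t].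
rewrite negb_imply => /andP[hst].
case As: (A s); case At: (A t) => //= _.
  by exists s, t; rewrite As At.
by exists t, s; rewrite adjC As At.
Qed.

Lemma cut_split F u s t : connect (remove_edges F) u s ->
  ~~ connect (remove_edges F) u t -> adj s t -> [set s; t] \in F.
Proof.
move=> hs ht hst; apply: contraNT ht => hn.
by apply: connect_trans hs (connect1 _); rewrite /remove_edges hst.
Qed.

Lemma incident_cut v w : w != v -> is_edge_cut (incident_edges v).
Proof.
move=> wv; split.
  by apply/subsetP=> E; rewrite inE => /andP[].
move=> [_ /(_ v w)] hc.
have cl : closed (remove_edges (incident_edges v)) (pred1 v).
  move=> x y /andP[hxy hn] /=.
  case: (eqVneq x v) => [ex|nx].
    by subst x; rewrite incident_adj in hn.
  case: (eqVneq y v) => [ey|ny]; last by rewrite !unfold_in /= (negbTE nx) (negbTE ny).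
  by subst y; rewrite set2C incident_adj // adjC in hn.
by move: (closed_connect cl hc); rewrite !unfold_in /= eqxx (negbTE wv).
Qed.

Lemma min_cut_eq F v w : is_min_edge_cut F -> w != v ->
  incident_edges v \subset F -> F = incident_edges v.
Proof.
move=> [_ Fle] wv sub; apply/esym/eqP; rewrite eqEcard sub /=.
exact: Fle (incident_cut wv).
Qed.

Lemma not_conn_ex F (x0 : G) : ~ connected_rel (remove_edges F) ->
  exists u y, ~~ connect (remove_edges F) u y.
Proof.
move=> nc; case: (boolP [forall u, forall y, connect (remove_edges F) u y]).
  by move=> /forallP h; exfalso; apply: nc; split; [exists x0| move=> u y; exact: (forallP (h u))].
rewrite negb_forall => /existsP[u]; rewrite negb_forall => /existsP[y] h.
by exists u, y.
Qed.

Lemma complete_super : (forall x y, x != y -> adj x y) -> connected G ->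
  super_edge_connected G.
Proof.
move=> comp Gc; split => // F Fmin.
have [[x0 _] _] := Gc.
have [[Fsub Fnc] Fle] := Fmin.
have [u [y nuy]] := not_conn_ex x0 Fnc.
set A := connect (remove_edges F) u.
have cross s t : A s -> ~~ A t -> [set s; t] \in F.
  move=> hs ht; have st : s != t by apply: contraNneq ht => <-.
  exact: (cut_split hs ht (comp _ _ st)).
have uA : A u := connect0 _ _.
have yu : y != u by apply: contraNneq nuy => ->; exact: connect0.
case: (boolP [exists r, A r && (r != u)]) => [/existsP[r0 /andP[r0A r0u]] | nA].
  case: (boolP [exists q, ~~ A q && (q != y)]) => [/existsP[q /andP[qA qy]] | nB].
    exfalso.
    pose D := [set~ u].
    pose phi r := if A r then [set r; y] else [set u; r].
    have phiF : {subset phi @: D <= F}.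
      move=> E /imsetP[r _ ->]; rewrite /phi; case: ifP => Ar.
        by apply: cross => //.
      by apply: cross => //; rewrite Ar.
    have inj : {in D &, injective phi}.
      move=> r1 r2; rewrite !inE /phi => r1u r2u.
      case A1: (A r1); case A2: (A r2) => /setP E.
      - move: (E r1); rewrite !inE eqxx /= => /esym/orP[/eqP//|/eqP ey].
        by subst r1; move: nuy; rewrite -/A A1.
      - move: (E u); rewrite !inE eqxx /= => /orP[/eqP eu|/eqP eu].
          by rewrite eu eqxx in r1u.
        by subst; rewrite connect0 in nuy.
      - move: (E u); rewrite !inE eqxx /= => /esym/orP[/eqP eu|/eqP eu].
          by rewrite eu eqxx in r2u.
        by subst; rewrite connect0 in nuy.
      - move: (E r1); rewrite !inE eqxx orbT (negbTE r1u) /= => /esym/eqP//.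
    have ext : [set r0; q] \notin phi @: D.
      apply/imsetP=> [[r _]]; rewrite /phi; case Ar: (A r) => /setP E.
        move: (E q); rewrite !inE eqxx orbT (negbTE qy) orbF => /esym/eqP eq.
        by subst q; rewrite Ar in qA.
      move: (E r0); rewrite !inE eqxx (negbTE r0u) /= => /esym/eqP er.
      by subst r0; rewrite Ar in r0A.
    have lt1 : #|D| < #|F|.
      rewrite -(card_in_imset inj); apply: proper_card; apply/properP; split.
        by apply/subsetP.
      by exists [set r0; q] => //; apply: cross.
    have le2 : #|incident_edges u| <= #|D|.
      apply: leq_trans (leq_imset_card (fun r => [set u; r]) D).
      apply: subset_leq_card; apply/subsetP=> E /incidentE[r [hr ->]].
      apply/imsetP; exists r => //; rewrite !inE.
      by apply: contraTneq hr => ->; rewrite adjxx.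
    have le3 := Fle _ (incident_cut yu).
    by move: (leq_ltn_trans (leq_trans le3 le2) lt1); rewrite ltnn.
  exists y; apply: (min_cut_eq Fmin (w := u)); first by rewrite eq_sym.
  apply/subsetP=> E /incidentE[r [hr ->]].
  have Ar : A r.
    apply/negPn/negP => nAr; apply: (negP nB); apply/existsP; exists r; rewrite nAr /=.
    by apply: contraTneq hr => ->; rewrite adjxx.
  by rewrite set2C; apply: cross.
exists u; apply: (min_cut_eq Fmin (w := y)) => //.
apply/subsetP=> E /incidentE[r [hr ->]].
apply: cross => //; apply: contraNN nA => Ar; apply/existsP; exists r.
by rewrite Ar /=; apply: contraTneq hr => ->; rewrite adjxx.
Qed.
End Gen.
Lemma induced_trans (S H K : sgraph) : induced_sub S H -> induced_sub H K -> induced_sub S K.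
Proof.
move=> [f [fi fa]] [g [gi ga]]; exists (g \o f); split; first exact: inj_comp.
by move=> x y; rewrite fa ga.
Qed.

Definition w0 : 'I_3 := @Ordinal 3 0 isT.
Definition w1 : 'I_3 := @Ordinal 3 1 isT.
Definition w2 : 'I_3 := @Ordinal 3 2 isT.

Lemma I3P (P : 'I_3 -> Prop) : P w0 -> P w1 -> P w2 -> forall i, P i.
Proof.
move=> h0 h1 h2 [[|[|[|m]]] Hm] //.
- by have -> : Ordinal Hm = w0 by apply: val_inj.
- by have -> : Ordinal Hm = w1 by apply: val_inj.
- by have -> : Ordinal Hm = w2 by apply: val_inj.
Qed.

Lemma P3_in (G : sgraph) (x z w : G) : adj x z -> adj z w -> ~~ adj x w -> x != w ->
  induced_sub P3 G.
Proof.
move=> hxz hzw hxw xw.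
have xz : x != z by apply: contraTneq hxz => ->; rewrite adjxx.
have zw : z != w by apply: contraTneq hzw => ->; rewrite adjxx.
pose h (i : 'I_3) := match val i with 0 => x | 1 => z | _ => w end.
exists h; split.
  move=> i j; elim/I3P: i; elim/I3P: j; rewrite /h /= => // /eqP;
  by rewrite ?(negbTE xz) ?(negbTE zw) ?(negbTE xw) // eq_sym ?(negbTE xz) ?(negbTE zw) ?(negbTE xw).
move=> i j; elim/I3P: i; elim/I3P: j; rewrite /h /= ?adjxx //;
  by rewrite ?hxz ?hzw ?(negbTE hxw) // adjC ?hxz ?hzw ?(negbTE hxw).
Qed.

Lemma noncomplete_P3 (G : sgraph) (x y : G) : connected G -> x != y -> ~~ adj x y ->
  induced_sub P3 G.
Proof.
move=> Gc xy nxy.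
pose a := fun z : G => (z == x) || adj x z.
have ax : a x by rewrite /a eqxx.
have ay : ~~ a y by rewrite /a (negbTE nxy) eq_sym (negbTE xy).
have [s [t [hst As At]]] := flip_edge Gc ax ay.
move: As At; rewrite /a negb_or => /orP[/eqP es|hxs] /andP[tx nxt].
  by subst s; rewrite hst in nxt.
by apply: (P3_in hxs hst nxt); rewrite eq_sym.
Qed.

Lemma backward (S : sgraph) : induced_sub S P3 ->
  forall G : sgraph, connected G -> free S G -> super_edge_connected G.
Proof.
move=> SP G Gc Gf; apply: (@complete_super G _ Gc) => x y xy.
apply/negPn/negP => nxy; apply: Gf; apply: induced_trans SP _.
exact: noncomplete_P3 Gc xy nxy.
Qed.
Definition v0 : 'I_4 := @Ordinal 4 0 isT.
Definition v1 : 'I_4 := @Ordinal 4 1 isT.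
Definition v2 : 'I_4 := @Ordinal 4 2 isT.
Definition v3 : 'I_4 := @Ordinal 4 3 isT.

Lemma I4P (P : 'I_4 -> Prop) : P v0 -> P v1 -> P v2 -> P v3 -> forall i, P i.
Proof.
move=> h0 h1 h2 h3 [[|[|[|[|m]]]] Hm] //.
- by have -> : Ordinal Hm = v0 by apply: val_inj.
- by have -> : Ordinal Hm = v1 by apply: val_inj.
- by have -> : Ordinal Hm = v2 by apply: val_inj.
- by have -> : Ordinal Hm = v3 by apply: val_inj.
Qed.

Definition P4_adj : rel 'I_4 := fun i j => (i.+1 == j :> nat) || (j.+1 == i :> nat).
Lemma P4_sym : symmetric P4_adj.
Proof. by move=> i j; rewrite /P4_adj orbC. Qed.
Lemma P4_irr : irreflexive P4_adj.
Proof. by elim/I4P. Qed.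
Definition P4 : sgraph := SGraph P4_sym P4_irr.

Definition C4_adj : rel 'I_4 := fun i j => (ordS i == j) || (ordS j == i).
Lemma C4_sym : symmetric C4_adj.
Proof. by move=> i j; rewrite /C4_adj orbC. Qed.
Lemma C4_irr : irreflexive C4_adj.
Proof. by elim/I4P. Qed.
Definition C4 : sgraph := SGraph C4_sym C4_irr.

Lemma P4_conn : connected P4.
Proof.
split; first by exists v0.
have h0 : forall i : P4, connect (@adj P4) v0 i.
  have e01 : connect (@adj P4) v0 v1 by apply: connect1.
  have e12 : connect (@adj P4) v1 v2 by apply: connect1.
  have e23 : connect (@adj P4) v2 v3 by apply: connect1.
  elim/I4P; first exact: connect0.
  - exact: e01.
  - exact: connect_trans e01 e12.
  - exact: connect_trans (connect_trans e01 e12) e23.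
move=> x y; apply: connect_trans (h0 y).
by rewrite (sym_connect_sym (@adj_sym P4)).
Qed.

Lemma C4_conn : connected C4.
Proof.
split; first by exists v0.
have h0 : forall i : C4, connect (@adj C4) v0 i.
  have e01 : connect (@adj C4) v0 v1 by apply: connect1.
  have e12 : connect (@adj C4) v1 v2 by apply: connect1.
  have e23 : connect (@adj C4) v2 v3 by apply: connect1.
  elim/I4P; first exact: connect0.
  - exact: e01.
  - exact: connect_trans e01 e12.
  - exact: connect_trans (connect_trans e01 e12) e23.
move=> x y; apply: connect_trans (h0 y).
by rewrite (sym_connect_sym (@adj_sym C4)).
Qed.
Lemma P4_not_super : ~ super_edge_connected P4.
Proof.
move=> [_ hs].
pose F : {set {set P4}} := [set [set v1; v2]].
have Fcut : is_edge_cut F.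
  split.
    by rewrite sub1set; apply: edgesP.
  move=> [_ /(_ v0 v3)] hc.
  have cl : closed (remove_edges F) (fun v : P4 => val v < 2).
    move=> x y; elim/I4P: x; elim/I4P: y; rewrite /remove_edges /F ?in_set1 //=;
    by rewrite ?eqxx // setUC eqxx.
  by move: (closed_connect cl hc).
have Fmin : is_min_edge_cut F.
  split => // F' [F'sub F'nc].
  have [u [y nuy]] := @not_conn_ex P4 _ v0 F'nc.
  have [s [t [hst As At]]] := flip_edge P4_conn (connect0 _ u) nuy.
  have := cut_split As At hst.
  by rewrite cards1 card_gt0 => h; apply/set0Pn; exists [set s; t].
have [v Fv] := hs F Fmin.
have : [set v1; v2] \in incident_edges v by rewrite -Fv in_set1.
rewrite inE => /andP[_]; rewrite !inE => /orP[]/eqP ev; subst v.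
- have : [set v1; v0] \in F by rewrite Fv; apply: (@incident_adj P4).
  by rewrite in_set1 => /eqP/setP/(_ v0); rewrite !inE.
- have : [set v2; v3] \in F by rewrite Fv; apply: (@incident_adj P4).
  by rewrite in_set1 => /eqP/setP/(_ v3); rewrite !inE.
Qed.
Lemma ordS4 : [/\ ordS v0 = v1, ordS v1 = v2, ordS v2 = v3 & ordS v3 = v0].
Proof. by split; apply: val_inj. Qed.

Lemma flips4 (b : 'I_4 -> bool) u y : b u -> ~~ b y ->
  exists i j, [/\ i != j, b i != b (ordS i) & b j != b (ordS j)].
Proof.
have [s0 s1 s2 s3] := ordS4.
elim/I4P: u; elim/I4P: y;
case b0: (b v0); case b1: (b v1); case b2: (b v2); case b3: (b v3) => //= _ _;
first [ by exists v0, v1; rewrite s0 s1 ?b0 ?b1 ?b2 ?b3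
      | by exists v0, v2; rewrite s0 s2 ?b0 ?b1 ?b2 ?b3
      | by exists v0, v3; rewrite s0 s3 ?b0 ?b1 ?b2 ?b3
      | by exists v1, v2; rewrite s1 s2 ?b0 ?b1 ?b2 ?b3
      | by exists v1, v3; rewrite s1 s3 ?b0 ?b1 ?b2 ?b3
      | by exists v2, v3; rewrite s2 s3 ?b0 ?b1 ?b2 ?b3 ].
Qed.

Lemma edges4_neq (i j : 'I_4) : i != j -> [set i; ordS i] != [set j; ordS j].
Proof.
have [s0 s1 s2 s3] := ordS4.
elim/I4P: i; elim/I4P: j; rewrite ?s0 ?s1 ?s2 ?s3 // => _; apply/eqP => /setP E;
first [ by move: (E v0); rewrite !inE
      | by move: (E v1); rewrite !inE
      | by move: (E v2); rewrite !inE
      | by move: (E v3); rewrite !inE ].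
Qed.

Lemma C4_not_super : ~ super_edge_connected C4.
Proof.
move=> [_ hs].
pose F : {set {set C4}} := [set [set v0; v1]; [set v2; v3]].
have Fcut : is_edge_cut F.
  split.
    by apply/subsetP=> E; rewrite !inE => /orP[]/eqP->; apply: (@edgesP C4).
  move=> [_ /(_ v0 v1)] hc.
  have cl : closed (remove_edges F) (fun v : C4 => (0 < val v) && (val v < 3)).
    move=> x y; elim/I4P: x; elim/I4P: y; rewrite /remove_edges /F ?inE //=;
    by rewrite ?eqxx ?orbT // setUC eqxx ?orbT.
  by move: (closed_connect cl hc).
have Fmin : is_min_edge_cut F.
  split => // F' [F'sub F'nc].
  have [u [y nuy]] := @not_conn_ex C4 _ v0 F'nc.
  set A := connect (remove_edges F') u.
  have key (i : C4) : A i != A (ordS i) -> [set i; ordS i] \in F'.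
    have hi : @adj C4 i (ordS i) by rewrite /= /C4_adj eqxx.
    case Ai: (A i); case Aj: (A (ordS i)) => // _.
      by apply: (cut_split Ai) => //; rewrite -/A Aj.
    by rewrite setUC; apply: (cut_split Aj) => //; rewrite -?/A ?Ai // adjC.
  have [i [j [ij fi fj]]] := flips4 (connect0 _ u) nuy.
  have sub : [set [set i; ordS i]; [set j; ordS j]] \subset F'.
    by apply/subsetP=> E; rewrite !inE => /orP[]/eqP->; apply: key.
  apply: leq_trans (subset_leq_card sub).
  by rewrite /F !cards2 (edges4_neq ij); case: (_ != _).
have [v Fv] := hs F Fmin.
have h1 : [set v0; v1] \in incident_edges v by rewrite -Fv !inE eqxx.
have h2 : [set v2; v3] \in incident_edges v by rewrite -Fv !inE eqxx orbT.
move: h1 h2; clear Fv; rewrite !inE => /andP[_ a] /andP[_ b]; move: a b.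
by elim/I4P: v.
Qed.
Lemma c4_three (a b c : 'I_4) : a != b -> a != c -> b != c ->
  ~~ C4_adj a b -> ~~ C4_adj a c -> False.
Proof. by elim/I4P: a; elim/I4P: b; elim/I4P: c. Qed.

Lemma shift_emb (S : sgraph) (g : S -> 'I_4) w : injective g ->
  (forall x y, adj x y = P4_adj (g x) (g y)) -> (forall s, w <= g s <= w + 2) ->
  induced_sub S P3.
Proof.
move=> gi ga gw.
have bd s : g s - w < 3 by have := gw s; lia.
exists (fun s => inord (g s - w) : 'I_3); split.
  move=> s t /(congr1 val); rewrite /= !inordK ?bd // => e.
  apply: gi; apply: ord_inj; have := gw s; have := gw t; lia.
move=> s t; rewrite ga /P4_adj /= /P3_adj !inordK ?bd //.
have := gw s; have := gw t => ht hs.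
apply/idP/idP => /orP[]/eqP h; apply/orP; [left|right|left|right]; apply/eqP; lia.
Qed.

Theorem theorem2p1 (S : sgraph) :
  connected S ->
  ((forall G : sgraph, connected G -> free S G -> super_edge_connected G)
   <-> induced_sub S P3).
Proof.
move=> Sc; split; last exact: backward.
move=> H.
have S4 : induced_sub S P4.
  by apply: NNPP => nf; exact: P4_not_super (H P4 P4_conn nf).
have S4' : induced_sub S C4.
  by apply: NNPP => nf; exact: C4_not_super (H C4 C4_conn nf).
have [g [gi ga]] := S4; have [h [hi ha]] := S4'.
case: (boolP [forall k : 'I_4, [exists s, g s == k]]) => [/forallP all | ].
  have [s0 /eqP g0] := existsP (all v0).
  have [s2 /eqP g2] := existsP (all v2).
  have [s3 /eqP g3] := existsP (all v3).
  have ne (a b : S) : g a != g b -> h a != h b.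
    by move=> nab; rewrite (inj_eq hi); apply: contraNneq nab => ->.
  exfalso; apply: (@c4_three (h s0) (h s2) (h s3)).
  - by apply: ne; rewrite g0 g2.
  - by apply: ne; rewrite g0 g3.
  - by apply: ne; rewrite g2 g3.
  - by have := ha s0 s2; rewrite /= => <-; rewrite ga g0 g2.
  - by have := ha s0 s3; rewrite /= => <-; rewrite ga g0 g3.
rewrite negb_forall => /existsP[k]; rewrite negb_exists => /forallP nk.
have nk' s : (g s : nat) <> k.
  by move=> e; apply: (negP (nk s)); apply/eqP/val_inj.
have [[s0 _] Sconn] := Sc.
have cl : closed (@adj S) (fun s => g s < k).
  move=> s t; rewrite ga /P4_adj => hst.
  have := nk' s; have := nk' t => ht hs.
  rewrite !unfold_in /=.
  by case/orP: hst => /eqP e; apply/idP/idP; lia.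
have const s : (g s < k) = (g s0 < k).
  by have := closed_connect cl (Sconn s0 s); rewrite !unfold_in /= => ->.
have kk := ltn_ord k.
case: (boolP (g s0 < k)) => hk.
  apply: (shift_emb (w := 0) gi ga) => s.
  by move: (const s); rewrite hk => hs; apply/andP; split; lia.
apply: (shift_emb (w := 1) gi ga) => s.
move: (const s); rewrite (negbTE hk) => hs; have := nk' s => hs'.
have g4 := ltn_ord (g s).
by apply/andP; split; lia.
Qed.
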